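(* Let $\mathcal{M}=(E,\mathcal{C})$ be a loopless oriented matroid with $E=\{e_1,\dots,e_m\}$ ordered $e_1\prec\cdots\prec e_m$, and let $1\le k\le m$. The map $\psi_k:\mathscr{N}_{k-1}\to\mathscr{N}_k$ is injective.
   Context: A signed subset of a finite set $E$ is a pair $X=(X^+,X^-)$ of disjoint subsets; support $\underline{X}=X^+\cup X^-$, $-X=(X^-,X^+)$. An oriented matroid $\mathcal{M}=(E,\mathcal{C})$: a collection $\mathcal{C}$ of signed subsets with (C1) empty signed set not in $\mathcal{C}$; (C2) $\mathcal{C}=-\mathcal{C}$; (C3) $\underline{X}\subseteq\underline{Y}$ for $X,Y\in\mathcal{C}$ implies $X=\pm Y$; (C4) for $X,Y\in\mathcal{C}$, $X\neq\pm Y$, $e\in X^+\cap Y^-$ there is $Z\in\mathcal{C}$ with $Z^+\subseteq X^+\cup Y^+-\{e\}$, $Z^-\subseteq X^-\cup Y^--\{e\}$. Underlying matroid $\underline{\mathcal{M}}$: circuits $\underline{X}$, $X\in\mathcal{C}$; loopless means no one-element circuit. Positive circuit: $X^-=\emptyset$; acyclic: no positive circuit. Reorientation ${}_{-A}\mathcal{M}$ ($A\subseteq E$): signed circuits ${}_{-A}X=((X^+-A)\cup(X^-\cap A),(X^--A)\cup(X^+\cap A))$; ${}_{-e}={}_{-\{e\}}$. Deletion $\mathcal{M}\backslash X$ on $E-X$: signed circuits $Y\in\mathcal{C}$ with $\underline{Y}\subseteq E-X$. Contraction $\mathcal{M}/X$ on $E-X$: support-minimal nonempty members of $\{(Y^+-X,Y^--X):Y\in\mathcal{C},\underline{Y}-X\ne\emptyset\}$.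 Broken circuit: circuit of $\underline{\mathcal{M}}$ minus its $\prec$-maximal element; $\mathrm{NBC}(\underline{\mathcal{M}})$: subsets of $E$ containing no broken circuit. $E_k=\{e_1,\dots,e_k\}$; for $N_k\subseteq E_k$, $N_k^c=E_k-N_k$. $\mathscr{N}_k$ is the set of pairs $(N_k,A_k)$ with $N_k\subseteq E_k$, $A_k\subseteq E-E_k$, $N_k\in\mathrm{NBC}(\underline{\mathcal{M}})$, and $\mathcal{M}_k:={}_{-A_k}(\mathcal{M}\backslash N_k^c/N_k)$ acyclic. For $(N_{k-1},A_{k-1})\in\mathscr{N}_{k-1}$ with $\mathcal{M}_{k-1}={}_{-A_{k-1}}(\mathcal{M}\backslash N_{k-1}^c/N_{k-1})$: $\psi_k(N_{k-1},A_{k-1})=(N_{k-1}\cup\{e_k\},A_{k-1})$ if $e_k\notin A_{k-1}$ and ${}_{-e_k}\mathcal{M}_{k-1}$ is acyclic; $=(N_{k-1},A_{k-1})$ if $e_k\notin A_{k-1}$ and ${}_{-e_k}\mathcal{M}_{k-1}$ is not acyclic; $=(N_{k-1},A_{k-1}-\{e_k\})$ if $e_k\in A_{k-1}$. *)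

(* Defs.v *)
(* Ground set E = {e_1,...,e_m} is modelled by 'I_m, with
   e_{i+1} the ordinal i, and e_1 < ... < e_m the natural order of 'I_m. *)
From mathcomp Require Import all_boot.
Set Implicit Arguments. Unset Strict Implicit. Unset Printing Implicit Defensive.

Section OM.
Variable m : nat.

(* A signed subset (X^+, X^-); disjointness is required of circuits in [OM]. *)
Definition sgn := ({set 'I_m} * {set 'I_m})%type.

Definition supp (X : sgn) : {set 'I_m} := X.1 :|: X.2.
Definition negs (X : sgn) : sgn := (X.2, X.1).

Definition OM (C : {set sgn}) : Prop :=
  [/\ (forall X, X \in C -> [disjoint X.1 & X.2]),
      (set0, set0) \notin C,
      (forall X, X \in C -> negs X \in C),
      (forall X Y, X \in C -> Y \in C -> supp X \subset supp Y ->
          X = Y \/ X = negs Y) &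
      (forall X Y e, X \in C -> Y \in C -> X <> Y -> X <> negs Y ->
          e \in X.1 :&: Y.2 ->
          exists2 Z, Z \in C &
            Z.1 \subset (X.1 :|: Y.1) :\ e /\ Z.2 \subset (X.2 :|: Y.2) :\ e)].

Definition loopless (C : {set sgn}) : Prop :=
  forall X, X \in C -> #|supp X| != 1.

Definition acyclic (C : {set sgn}) : bool :=
  [forall X in C, X.2 != set0].

Definition reor (A : {set 'I_m}) (X : sgn) : sgn :=
  ((X.1 :\: A) :|: (X.2 :&: A), (X.2 :\: A) :|: (X.1 :&: A)).
Definition reorient (A : {set 'I_m}) (C : {set sgn}) : {set sgn} :=
  [set reor A X | X in C].

Definition delete (C : {set sgn}) (X : {set 'I_m}) : {set sgn} :=
  [set Y in C | supp Y \subset ~: X].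

Definition contr_cands (C : {set sgn}) (X : {set 'I_m}) : {set sgn} :=
  [set ((Y.1 :\: X), (Y.2 :\: X)) | Y in C & supp Y :\: X != set0].
Definition contract (C : {set sgn}) (X : {set 'I_m}) : {set sgn} :=
  [set Z in contr_cands C X |
     [forall W in contr_cands C X, ~~ (supp W \proper supp Z)]].

Definition has_bc (C : {set sgn}) (N : {set 'I_m}) : bool :=
  [exists X in C, exists e in supp X,
     [forall j in supp X, j <= e] && (supp X :\ e \subset N)].
Definition nbc (C : {set sgn}) (N : {set 'I_m}) : bool := ~~ has_bc C N.

Definition Ek (k : nat) : {set 'I_m} := [set i : 'I_m | i < k].

Definition minorN (C : {set sgn}) (k : nat) (N : {set 'I_m}) : {set sgn} :=
  contract (delete C (Ek k :\: N)) N.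

Definition Mk (C : {set sgn}) (k : nat) (p : {set 'I_m} * {set 'I_m}) :
  {set sgn} := reorient p.2 (minorN C k p.1).

Definition scrN (C : {set sgn}) (k : nat) : {set {set 'I_m} * {set 'I_m}} :=
  [set p : {set 'I_m} * {set 'I_m} | [&& p.1 \subset Ek k, p.2 \subset ~: Ek k, nbc C p.1 &
              acyclic (Mk C k p)]].

(* psi_k, where e = e_k (so e is the ordinal k-1) *)
Definition psi (C : {set sgn}) (k : nat) (e : 'I_m)
    (p : {set 'I_m} * {set 'I_m}) : {set 'I_m} * {set 'I_m} :=
  if e \notin p.2 then
    (if acyclic (reorient [set e] (Mk C k.-1 p)) then (e |: p.1, p.2)
     else p)
  else (p.1, p.2 :\ e).

End OM.

(* Main.v *)
Require Import Defs.
From mathcomp Require Import all_boot.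

Lemma reor_comp m (A : {set 'I_m}) e (X : sgn m) : e \notin A ->
  reor [set e] (reor A X) = reor (e |: A) X.
Proof.
move=> eA; rewrite /reor /=; congr pair; apply/setP => x; rewrite !inE;
case: (eqVneq x e) => [->|/negbTE xe]; rewrite ?xe ?eqxx ?(negbTE eA) /=;
by case: (_ \in X.1); case: (_ \in X.2); case: (_ \in A).
Qed.

Lemma reorient_comp m (A : {set 'I_m}) e (C : {set sgn m}) : e \notin A ->
  reorient [set e] (reorient A C) = reorient (e |: A) C.
Proof.
move=> eA; rewrite /reorient -imset_comp; apply: eq_imset => X /=.
exact: reor_comp.
Qed.

(* e : 'I_m is e_k, i.e. the ordinal with value k-1; this forces 1 <= k <= m. *)
Theorem lemma2p4 (m : nat) (C : {set sgn m}) (k : nat) (e : 'I_m) :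
  OM C -> loopless C -> (e : nat).+1 = k ->
  {in scrN C k.-1 &, injective (psi C k e)}.
Proof.
move=> _ _ ek [p1 p2] [q1 q2]; rewrite !inE /= => /and4P [p1E _ _ pac] /and4P [q1E _ _ qac].
have enE : e \notin Ek m k.-1 by rewrite inE -ek /= ltnn.
have ep1 : e \notin p1 by apply: contra enE; apply: (subsetP p1E).
have eq1 : e \notin q1 by apply: contra enE; apply: (subsetP q1E).
(* key: collision between case 2 and case 3 is impossible *)
have key : forall a1 a2 b2 : {set 'I_m}, e \notin a2 -> e \in b2 -> a2 = b2 :\ e ->
    acyclic (Mk C k.-1 (a1, b2)) ->
    acyclic (reorient [set e] (Mk C k.-1 (a1, a2))).
  move=> a1 a2 b2 ea2 eb2 -> bac.
  by rewrite /Mk /= reorient_comp ?setD11 // setD1K.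
rewrite /psi /=.
case: (boolP (e \in p2)) => ep2; case: (boolP (e \in q2)) => eq2 /=.
- move=> [-> h]; congr pair.
  by rewrite -(setD1K ep2) -(setD1K eq2) h.
- case: ifP => qr [h1 h2]; first by move: ep1; rewrite h1 setU11.
  by move: qr; rewrite (key q1 q2 p2) // -h1.
- case: ifP => pr [h1 h2]; first by move: eq1; rewrite -h1 setU11.
  by move: pr; rewrite (key p1 p2 q2) // h1.
- case: ifP => pr; case: ifP => qr //.
  + move=> [h1 ->]; congr pair.
    by rewrite -(setU1K ep1) -(setU1K eq1) h1.
  + by move=> [h1 _]; move: eq1; rewrite -h1 setU11.
  + by move=> [h1 _]; move: ep1; rewrite h1 setU11.
Qed.
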